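(* There are two primitive embeddings of the lattice $A_5\oplus A_1$ into the root lattice $D_8$ that are not isomorphic up to the Weyl group $W(D_8)$, i.e. no element of $W(D_8)$ maps the image of one onto the image of the other. Explicitly, identifying $D_8(-1)$ with $\{v\in\mathbb Z^8:\sum v_i\text{ even}\}$ with standard basis $\varepsilon_1,\dots,\varepsilon_8$, and taking the basis $d_8=\varepsilon_1+\varepsilon_2$, $d_{9-i}=-\varepsilon_{i-1}+\varepsilon_i$ ($2\le i\le 8$), the two embeddings have images $\langle d_7,d_6,d_5,d_4,d_3\rangle\oplus\langle \varepsilon_7+\varepsilon_8\rangle$ and $\langle d_7,d_6,d_5,d_4,d_3\rangle\oplus\langle d_1\rangle$.
   Context: $A_k$, $D_k$ denote the negative-definite root lattices of the corresponding Dynkin types. An embedding is primitive if the quotient is torsion-free. The Weyl group $W(D_8)$ is generated by the reflections $x\mapsto x+(a\cdot x)a$ in roots $a$ ($a\cdot a=-2$) of $D_8$. *)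

(* Defs.v *)
From HB Require Import structures.
From mathcomp Require Import all_boot all_order all_algebra.
Set Implicit Arguments. Unset Strict Implicit. Unset Printing Implicit Defensive.
Import Order.TTheory GRing.Theory Num.Theory.
Local Open Scope ring_scope.

Notation vec8 := 'rV[int]_8.

Definition bD8 (u v : vec8) : int := - \sum_(i < 8) u 0 i * v 0 i.

Definition inD8 (v : vec8) : Prop := (2 %| \sum_(i < 8) v 0 i)%Z.

Definition isRootD8 (a : vec8) : Prop := inD8 a /\ bD8 a a = -2.

Definition refl (a : vec8) (x : vec8) : vec8 := x + bD8 a x *: a.

(* W(D_8): the group generated by the reflections in roots of D_8
   (reflections are involutions, so the generated monoid is the group). *)
Inductive inWD8 : (vec8 -> vec8) -> Prop :=
| WD8_id : inWD8 id
| WD8_refl (a : vec8) (f : vec8 -> vec8) :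
    isRootD8 a -> inWD8 f -> inWD8 (refl a \o f).

(* standard basis eps_1 .. eps_8 (1-indexed) *)
Definition eps (k : nat) : vec8 := \row_(j < 8) (if (j : nat) == k.-1 then 1 else 0).

(* basis d_8 = eps_1 + eps_2, d_{9-i} = - eps_{i-1} + eps_i  (2 <= i <= 8) *)
Definition d (k : nat) : vec8 :=
  if k == 8%N then eps 1 + eps 2 else - eps (8 - k) + eps (9 - k).

(* Gram matrix of A_5 (+) A_1 (negative definite) w.r.t. simple roots
   r_0,...,r_4 (A_5 chain) and r_5 (A_1). *)
Definition gramA5A1 (i j : 'I_6) : int :=
  if i == j then -2
  else if [&& (i < 5)%N, (j < 5)%N & ((i == j.+1 :> nat) || (j == i.+1 :> nat))]
       then 1 else 0.

(* A Z-linear map from A_5 (+) A_1 = Z^6 into Z^8, given by the images of the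
   simple roots, is an embedding into D_8 if its image lies in D_8 and it
   preserves the form (injectivity follows from nondegeneracy). *)
Definition isEmbeddingA5A1 (L : 'I_6 -> vec8) : Prop :=
  (forall i, inD8 (L i)) /\ (forall i j, bD8 (L i) (L j) = gramA5A1 i j).

Definition imageL (L : 'I_6 -> vec8) (v : vec8) : Prop :=
  exists c : 'I_6 -> int, v = \sum_(i < 6) c i *: L i.

Definition primitiveL (L : 'I_6 -> vec8) : Prop :=
  forall (v : vec8) (n : int), inD8 v -> n != 0 -> imageL L (n *: v) -> imageL L v.

Definition mapsOnto (w : vec8 -> vec8) (L L' : 'I_6 -> vec8) : Prop :=
  (forall v, imageL L v -> imageL L' (w v)) /\
  (forall v', imageL L' v' -> exists v, imageL L v /\ w v = v').

Definition emb1 (i : 'I_6) : vec8 :=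
  nth 0 [:: d 7; d 6; d 5; d 4; d 3; eps 7 + eps 8] i.
Definition emb2 (i : 'I_6) : vec8 :=
  nth 0 [:: d 7; d 6; d 5; d 4; d 3; d 1] i.

(* Main.v *)
Require Import Defs.
From mathcomp Require Import all_boot all_order all_algebra.
From mathcomp Require Import all_fingroup zify ring lra.
Set Implicit Arguments. Unset Strict Implicit. Unset Printing Implicit Defensive.
Import Order.TTheory GRing.Theory Num.Theory.
Local Open Scope ring_scope.

Lemma sum_ind (s t : int) (p q : 'I_8) (y : 'I_8 -> int) : p != q ->
  \sum_(i < 8) (s * (i == p)%:R + t * (i == q)%:R) * y i = s * y p + t * y q.
Proof.
move=> hpq.
rewrite (bigD1 p) //= (bigD1 q) /=; last by rewrite eq_sym.
rewrite big1 ?addr0 => [|i /andP[hip hiq]]; last by rewrite (negbTE hip) (negbTE hiq) !mulr0 addr0 mul0r.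
rewrite eqxx (negbTE hpq) eq_sym (negbTE hpq) /= !mulr1 !mulr0 addr0 add0r eqxx /=.
lia.
Qed.

Lemma sq1 (x : int) : x * x <= 2 -> x != 0 -> x * x = 1.
Proof.
move=> h /eqP hx.
have [h1|[h1|h1]] : x <= -2 \/ (-1 <= x <= 1) \/ 2 <= x by lia.
- nia.
- have : x = 1 \/ x = -1 by lia. by case=> ->.
- nia.
Qed.

Lemma root_form a : isRootD8 a -> exists p q : 'I_8, exists s t : int,
  [/\ p != q, (s = 1 \/ s = -1), (t = 1 \/ t = -1) &
   forall k, a 0 k = s * (k == p)%:R + t * (k == q)%:R].
Proof.
move=> [_ ha]; move: ha; rewrite /bD8 => /eqP; rewrite eqr_opp => /eqP hs.
have sq0 : forall x : int, 0 <= x * x by move=> x; nia.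
case: (pickP (fun k => a 0 k != 0)) => [p hp|hn]; last first.
  move: hs; rewrite big1 //.
  by move=> k _; move: (hn k) => /negbFE/eqP ->; rewrite mulr0.
move: hs; rewrite (bigD1 p) //= => hs.
have hr : 0 <= \sum_(i < 8 | i != p) a 0 i * a 0 i by apply: sumr_ge0 => i _.
have hp1 : a 0 p * a 0 p = 1.
  by apply: sq1 => //; rewrite -hs lerDl.
have hrest : \sum_(i < 8 | i != p) a 0 i * a 0 i = 1 by apply: (addrI (a 0 p * a 0 p)); rewrite hs hp1.
case: (pickP (fun k => (k != p) && (a 0 k != 0))) => [q /andP[hqp hq]|hn]; last first.
  move: hrest; rewrite big1 //.
  by move=> k hk; move: (hn k); rewrite hk /= => /negbFE/eqP ->; rewrite mulr0.
move: hrest; rewrite (bigD1 q) //= => hrest.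
have hr2 : 0 <= \sum_(i < 8 | (i != p) && (i != q)) a 0 i * a 0 i by apply: sumr_ge0 => i _.
have hq1 : a 0 q * a 0 q = 1.
  by apply: sq1 => //; apply: (@le_trans _ _ 1) => //; rewrite -[X in _ <= X]hrest lerDl.
have h0 : \sum_(i < 8 | (i != p) && (i != q)) a 0 i * a 0 i = 0 by apply: (addrI (a 0 q * a 0 q)); rewrite hrest hq1 addr0.
move/eqP: h0; rewrite psumr_eq0 => [/allP h0|i _]; last exact: sq0.
exists p, q, (a 0 p), (a 0 q); split.
- by rewrite eq_sym.
- nia.
- nia.
move=> k; case: (eqVneq k p) => [->|hkp].
  by rewrite ?eqxx eq_sym (negbTE hqp) /=; lia.
case: (eqVneq k q) => [->|hkq].
  by rewrite /=; lia.
rewrite /=.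
have := h0 k (mem_index_enum _); rewrite hkp hkq /= => /eqP; nia.
Qed.

Lemma refl_form (a : vec8) (p q : 'I_8) (s t : int) : p != q -> (s = 1 \/ s = -1) -> (t = 1 \/ t = -1) ->
  (forall k, a 0 k = s * (k == p)%:R + t * (k == q)%:R) ->
  forall (y : vec8) k, refl a y 0 k = (if (k == p) || (k == q) then -(s * t) else 1) * y 0 (tperm p q k).
Proof.
move=> hpq hs ht ha y k.
rewrite /refl /bD8 !mxE.
rewrite (eq_bigr (fun i => (s * (i == p)%:R + t * (i == q)%:R) * y 0 i)); last by move=> i _; rewrite ha.
rewrite sum_ind // ha.
case: (eqVneq k p) => [->|hkp].
  rewrite tpermL /=; have -> : (p == q) = false by apply/negbTE.
  by case: hs => ->; case: ht => ->; lia.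
case: (eqVneq k q) => [->|hkq].
  rewrite tpermR /=.
  by case: hs => ->; case: ht => ->; lia.
rewrite tpermD 1?eq_sym //= ; lia.
Qed.

Definition SP (w : vec8 -> vec8) := exists (pi : {perm 'I_8}) (u : 'I_8 -> int),
  [/\ (forall k, u k = 1 \/ u k = -1), \prod_k u k = 1 &
      forall x k, w x 0 k = u k * x 0 (pi k)].

Lemma SP_id : SP id.
Proof.
exists 1%g, (fun _ => 1); split.
- by move=> k; left.
- by rewrite big1.
- by move=> x k; rewrite perm1 mul1r.
Qed.

Lemma SP_refl a f : isRootD8 a -> SP f -> SP (refl a \o f).
Proof.
move=> /root_form [p [q [s [t [hpq hs ht ha]]]]] [pi [u [hu hprod hf]]].
exists (tperm p q * pi)%g, (fun k => (if (k == p) || (k == q) then -(s * t) else 1) * u (tperm p q k)).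
split.
- move=> k; case: ifP => _; last by rewrite mul1r.
  by case: hs => ->; case: ht => ->; case: (hu (tperm p q k)) => ->; lia.
- rewrite big_split /=.
  have -> : \prod_k u (tperm p q k) = \prod_k u k.
    by rewrite [RHS](reindex_inj (@perm_inj _ (tperm p q))).
  rewrite hprod mulr1 (bigD1 p) //= (bigD1 q) /=; last by rewrite eq_sym.
  rewrite big1 => [|i /andP[hip hiq]]; last by rewrite (negbTE hip) (negbTE hiq).
  rewrite ?eqxx /= orbT.
  by case: hs => ->; case: ht => ->; lia.
- by move=> x k; rewrite /= (refl_form hpq hs ht ha) hf permM mulrA.
Qed.

Lemma inW_SP w : inWD8 w -> SP w.
Proof. elim => [|a f ha _ IH]; [exact: SP_id | exact: SP_refl]. Qed.

Definition E1 (i k : nat) : int :=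
  match i, k with
  | 0,0 => -1 | 0,1 => 1 | 1,1 => -1 | 1,2 => 1 | 2,2 => -1 | 2,3 => 1
  | 3,3 => -1 | 3,4 => 1 | 4,4 => -1 | 4,5 => 1 | 5,6 => 1 | 5,7 => 1 | _,_ => 0 end.
Definition E2 (i k : nat) : int :=
  match i, k with
  | 0,0 => -1 | 0,1 => 1 | 1,1 => -1 | 1,2 => 1 | 2,2 => -1 | 2,3 => 1
  | 3,3 => -1 | 3,4 => 1 | 4,4 => -1 | 4,5 => 1 | 5,6 => -1 | 5,7 => 1 | _,_ => 0 end.

Lemma emb1E (i : 'I_6) : emb1 i = \row_k E1 i k.
Proof.
apply/rowP => k; rewrite mxE.
case: i => [[|[|[|[|[|[|//]]]]]] Hi]; rewrite /emb1 /d /= !mxE;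
case: k => [[|[|[|[|[|[|[|[|//]]]]]]]] Hk] /=; done.
Qed.
Lemma emb2E (i : 'I_6) : emb2 i = \row_k E2 i k.
Proof.
apply/rowP => k; rewrite mxE.
case: i => [[|[|[|[|[|[|//]]]]]] Hi]; rewrite /emb2 /d /= !mxE;
case: k => [[|[|[|[|[|[|[|[|//]]]]]]]] Hk] /=; done.
Qed.


Definition F1 (v : vec8) := \sum_(k < 8 | (k < 6)%N) v 0 k.
Definition F2 (v : vec8) := \sum_(k < 8 | (6 <= k)%N) v 0 k.
Definition G2 (v : vec8) := \sum_(k < 8) (if k == 6%N :> nat then 1 else if k == 7%N :> nat then -1 else 0) * v 0 k.

Lemma img2 v : imageL emb2 v -> F1 v = 0 /\ F2 v = 0.
Proof.
move=> [c ->]; rewrite /F1 /F2; split; rewrite big_mkcond /= !big_ord_recr !big_ord0 /= !emb2E !mxE /=; lia.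
Qed.

Lemma img1 v : imageL emb1 v -> F1 v = 0 /\ G2 v = 0.
Proof.
move=> [c ->]; rewrite /F1 /G2; split; rewrite ?big_mkcond /= !big_ord_recr !big_ord0 /= !emb1E !mxE /=; lia.
Qed.

Lemma prim1 : primitiveL emb1.
Proof.
move=> v n _ nz /img1 [h1 h2].
pose V := fun m : nat => v 0 (inord m).
have vE : forall k : 'I_8, v 0 k = V k by move=> k; rewrite /V inord_val.
move: h1 h2; rewrite /F1 /G2 big_mkcond /= !big_ord_recr !big_ord0 /= !mxE !vE /= => h1 h2.
have e1 : n * (V 6%N - V 7%N) = 0 by lia.
have e2 : n * (V 0%N + V 1%N + V 2%N + V 3%N + V 4%N + V 5%N) = 0 by lia.
move/eqP: e1; rewrite mulf_eq0 (negbTE nz) /= subr_eq0 => /eqP e1.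
move/eqP: e2; rewrite mulf_eq0 (negbTE nz) /= => /eqP e2.
exists (fun i : 'I_6 => nth 0 [:: -V 0%N; -(V 0%N + V 1%N); -(V 0%N + V 1%N + V 2%N);
   -(V 0%N + V 1%N + V 2%N + V 3%N); -(V 0%N + V 1%N + V 2%N + V 3%N + V 4%N); V 6%N] i).
apply/rowP => k; rewrite !big_ord_recr !big_ord0 /= !emb1E !mxE vE.
case: k => [[|[|[|[|[|[|[|[|//]]]]]]]] Hk] /=; lia.
Qed.

Lemma prim2 : primitiveL emb2.
Proof.
move=> v n _ nz /img2 [h1 h2].
pose V := fun m : nat => v 0 (inord m).
have vE : forall k : 'I_8, v 0 k = V k by move=> k; rewrite /V inord_val.
move: h1 h2; rewrite /F1 /F2 big_mkcond /= !big_ord_recr !big_ord0 /= !mxE !vE /= => h1.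
rewrite big_mkcond /= !big_ord_recr !big_ord0 /= !mxE !vE /= => h2.
have e1 : n * (V 6%N + V 7%N) = 0 by lia.
have e2 : n * (V 0%N + V 1%N + V 2%N + V 3%N + V 4%N + V 5%N) = 0 by lia.
move/eqP: e1; rewrite mulf_eq0 (negbTE nz) /= => /eqP e1.
move/eqP: e2; rewrite mulf_eq0 (negbTE nz) /= => /eqP e2.
exists (fun i : 'I_6 => nth 0 [:: -V 0%N; -(V 0%N + V 1%N); -(V 0%N + V 1%N + V 2%N);
   -(V 0%N + V 1%N + V 2%N + V 3%N); -(V 0%N + V 1%N + V 2%N + V 3%N + V 4%N); V 7%N] i).
apply/rowP => k; rewrite !big_ord_recr !big_ord0 /= !emb2E !mxE vE.
case: k => [[|[|[|[|[|[|[|[|//]]]]]]]] Hk] /=; lia.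
Qed.

Lemma sum_cond (P : pred 'I_8) (g : 'I_8 -> int) (r : 'I_8) :
  \sum_(k < 8 | P k) g k * (k == r)%:R = if P r then g r else 0.
Proof.
rewrite big_mkcond (bigD1 r) //= big1 => [|i /negbTE hi]; last by case: (P i); rewrite // hi /=; lia.
rewrite eqxx addr0 /=; case: (P r) => //; lia.
Qed.

Lemma keyG (pi : {perm 'I_8}) (u : 'I_8 -> int) (w : vec8 -> vec8) :
  (forall k, u k = 1 \/ u k = -1) -> (forall x k, w x 0 k = u k * x 0 (pi k)) ->
  forall (x : vec8) (p q : 'I_8) (A B : int), (A = 1 \/ A = -1) -> (B = 1 \/ B = -1) ->
  (forall j, x 0 j = A * (j == p)%:R + B * (j == q)%:R) -> imageL emb2 (w x) ->
  A * u (pi^-1 p)%g + B * u (pi^-1 q)%g = 0.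
Proof.
move=> hu hf x p q A B hA hB hx /img2 [h1 h2].
have e : forall k r, (pi k == r) = (k == (pi^-1)%g r).
  by move=> k r; apply/eqP/eqP => [<-|->]; rewrite ?permK ?permKV.
have wE : forall k, w x 0 k = (u k * A) * (k == (pi^-1)%g p)%:R + (u k * B) * (k == (pi^-1)%g q)%:R.
  by move=> k; rewrite hf hx !e mulrDr !mulrA.
have sP : forall P : pred 'I_8, \sum_(k < 8 | P k) w x 0 k =
   (if P ((pi^-1)%g p) then u ((pi^-1)%g p) * A else 0) + (if P ((pi^-1)%g q) then u ((pi^-1)%g q) * B else 0).
  by move=> P; rewrite (eq_bigr _ (fun k _ => wE k)) big_split /= !sum_cond.
move: h1 h2; rewrite /F1 /F2 (sP (fun k => k < 6)%N) (sP (fun k => 5 < k)%N) /=.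
case: (ltnP ((pi^-1)%g p) 6) => _; case: (ltnP ((pi^-1)%g q) 6) => _ /=;
case: (hu ((pi^-1)%g p)) => ->; case: (hu ((pi^-1)%g q)) => ->; case: hA => ->; case: hB => ->; lia.
Qed.

Lemma img_self1 i : imageL emb1 (emb1 i).
Proof.
exists (fun j => (j == i)%:R).
rewrite (bigD1 i) //= big1 ?addr0 ?eqxx ?scale1r // => j /negbTE -> /=; by rewrite scale0r.
Qed.

Ltac hxt := let j := fresh "j" in let Hj := fresh "Hj" in
  move=> j; rewrite emb1E mxE; case: j => [[|[|[|[|[|[|[|[|//]]]]]]]] Hj] /=; lia.

Lemma noW w : SP w -> (forall v, imageL emb1 v -> imageL emb2 (w v)) -> False.
Proof.
move=> [pi [u [hu hprod hf]]] him.
pose U := fun m : nat => u ((pi^-1)%g (inord m)).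
have uE : forall k : 'I_8, u ((pi^-1)%g k) = U k by move=> k; rewrite /U inord_val.
have hU : forall m, U m = 1 \/ U m = -1 by move=> m; exact: hu.
have K := keyG hu hf.
have k0 := K (emb1 (@Ordinal 6 0 isT)) (@Ordinal 8 1 isT) (@Ordinal 8 0 isT) 1 (-1) (or_introl erefl) (or_intror erefl) ltac:(hxt) (him _ (img_self1 _)).
have k1 := K (emb1 (@Ordinal 6 1 isT)) (@Ordinal 8 2 isT) (@Ordinal 8 1 isT) 1 (-1) (or_introl erefl) (or_intror erefl) ltac:(hxt) (him _ (img_self1 _)).
have k2 := K (emb1 (@Ordinal 6 2 isT)) (@Ordinal 8 3 isT) (@Ordinal 8 2 isT) 1 (-1) (or_introl erefl) (or_intror erefl) ltac:(hxt) (him _ (img_self1 _)).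
have k3 := K (emb1 (@Ordinal 6 3 isT)) (@Ordinal 8 4 isT) (@Ordinal 8 3 isT) 1 (-1) (or_introl erefl) (or_intror erefl) ltac:(hxt) (him _ (img_self1 _)).
have k4 := K (emb1 (@Ordinal 6 4 isT)) (@Ordinal 8 5 isT) (@Ordinal 8 4 isT) 1 (-1) (or_introl erefl) (or_intror erefl) ltac:(hxt) (him _ (img_self1 _)).
have k5 := K (emb1 (@Ordinal 6 5 isT)) (@Ordinal 8 6 isT) (@Ordinal 8 7 isT) 1 1 (or_introl erefl) (or_introl erefl) ltac:(hxt) (him _ (img_self1 _)).
move: k0 k1 k2 k3 k4 k5; rewrite !uE /= => k0 k1 k2 k3 k4 k5.
move: hprod; rewrite (reindex_inj (@perm_inj _ (pi^-1)%g)) !big_ord_recr big_ord0 /= !uE /=.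
have -> : U 1%N = U 0%N by lia.
have -> : U 2%N = U 0%N by lia.
have -> : U 3%N = U 0%N by lia.
have -> : U 4%N = U 0%N by lia.
have -> : U 5%N = U 0%N by lia.
have -> : U 6%N = - U 7%N by lia.
by case: (hU 0%N) => ->; case: (hU 7%N) => ->.
Qed.


Lemma emb1_form : forall i j, bD8 (emb1 i) (emb1 j) = gramA5A1 i j.
Proof.
move=> i j; rewrite !emb1E /bD8 !big_ord_recr big_ord0 !mxE /gramA5A1.
case: i => [[|[|[|[|[|[|//]]]]]] Hi];
case: j => [[|[|[|[|[|[|//]]]]]] Hj]; done.
Qed.

Lemma emb2_form : forall i j, bD8 (emb2 i) (emb2 j) = gramA5A1 i j.
Proof.
move=> i j; rewrite !emb2E /bD8 !big_ord_recr big_ord0 !mxE /gramA5A1.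
case: i => [[|[|[|[|[|[|//]]]]]] Hi];
case: j => [[|[|[|[|[|[|//]]]]]] Hj]; done.
Qed.

Lemma emb1_D8 i : inD8 (emb1 i).
Proof.
rewrite emb1E /inD8 !big_ord_recr big_ord0 !mxE.
by case: i => [[|[|[|[|[|[|//]]]]]] Hi].
Qed.

Lemma emb2_D8 i : inD8 (emb2 i).
Proof.
rewrite emb2E /inD8 !big_ord_recr big_ord0 !mxE.
by case: i => [[|[|[|[|[|[|//]]]]]] Hi].
Qed.

Theorem mainTheorem5 :
  isEmbeddingA5A1 emb1 /\ isEmbeddingA5A1 emb2 /\
  primitiveL emb1 /\ primitiveL emb2 /\
  ~ (exists w, inWD8 w /\ mapsOnto w emb1 emb2).
Proof.
split; first by split; [exact: emb1_D8 | exact: emb1_form].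
split; first by split; [exact: emb2_D8 | exact: emb2_form].
split; first exact: prim1.
split; first exact: prim2.
move=> [w [hw [him _]]].
exact: (noW (inW_SP hw) him).
Qed.
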